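(* For every integer $d\ge 2$ and every $\theta>0$, in the stag hunt game described in the context, $F$ is strictly decreasing in $\sigma_c^2$, strictly decreasing in $\sigma_b^2$, and strictly increasing in $\sigma_{bc}$ (each time with the remaining parameters $\mu_b,\mu_c$ and the other second moments held fixed).
   Context: For integers $0\le k\le n$ and $\theta>0$ let $\psi_n^k=\frac{\prod_{i=1}^{k}(\theta+i-1)\prod_{j=1}^{n-k}(\theta+j-1)}{\prod_{l=1}^{n}(2\theta+l-1)}$ (empty products equal $1$). For real arrays $\mu_{C,k},\mu_{D,k},\sigma_{CC,kl},\sigma_{CD,kl},\sigma_{DD,kl}$ ($k,l=0,\ldots,d-1$) define $$F=\sum_{k=0}^{d-1}\binom{d-1}{k}\psi_{d+1}^{k+1}(\mu_{C,k}-\mu_{D,k})+\sum_{k,l=0}^{d-1}\binom{d-1}{k}\binom{d-1}{l}\Big[-\psi_{2d+1}^{k+l+2}(\sigma_{CC,kl}-\sigma_{CD,kl})+\psi_{2d+1}^{k+l+1}(\sigma_{DD,kl}-\sigma_{CD,kl})\Big].$$ These arrays are the scaled means and second moments of the payoffs $a_k$ (to a cooperator) and $b_k$ (to a defector) with $k$ cooperating partners in a group of size $d$. In the paper's large-population weak-selection approximation, the average abundance of $C$ is $\tfrac12+\tfrac{\delta(1-u)}{u}F$; weak selection favors the abundance of $C$ iff $F>0$, and increasing $F$ means increasing the average abundance of $C$. Stag hunt game: random benefit $b$ and cost $c$ have scaled moments $\mu_b,\mu_c,\sigma_b^2,\sigma_c^2,\sigma_{bc}$ (i.e. $E[b]=\mu_b\delta+o(\delta)$,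 $E[c]=\mu_c\delta+o(\delta)$, $E[b^2]=\sigma_b^2\delta+o(\delta)$, $E[c^2]=\sigma_c^2\delta+o(\delta)$, $E[bc]=\sigma_{bc}\delta+o(\delta)$). The payoffs are $a_k=-c$ for $k<d-1$, $a_{d-1}=b-c$, and $b_k=0$ for all $k$. Hence $\mu_{C,k}=-\mu_c$ for $k<d-1$, $\mu_{C,d-1}=\mu_b-\mu_c$, $\mu_{D,k}=0$, and $\sigma_{CD,kl}=\sigma_{DD,kl}=0$. Furthermore $\sigma_{CC,kl}=\sigma_c^2$ if $k,l<d-1$; $\sigma_{CC,kl}=\sigma_c^2-\sigma_{bc}$ if exactly one of $k,l$ equals $d-1$; and $\sigma_{CC,kl}=\sigma_c^2-2\sigma_{bc}+\sigma_b^2$ if $k=l=d-1$. *)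

(* Defs.v *)
From mathcomp Require Import all_boot all_order all_algebra.
Set Implicit Arguments. Unset Strict Implicit. Unset Printing Implicit Defensive.
Import Order.TTheory GRing.Theory Num.Theory.
Local Open Scope ring_scope.

(* psi_n^k = prod_{i=1}^k (theta+i-1) * prod_{j=1}^{n-k} (theta+j-1)
             / prod_{l=1}^n (2 theta + l - 1);  used only for 0 <= k <= n *)
Definition psi {R : realFieldType} (theta : R) (n k : nat) : R :=
  (\prod_(i < k) (theta + i%:R)) * (\prod_(j < n - k) (theta + j%:R))
  / \prod_(l < n) (2 * theta + l%:R).

Definition Fgen {R : realFieldType} (d : nat) (theta : R)
  (muC muD : nat -> R) (sCC sCD sDD : nat -> nat -> R) : R :=
  \sum_(k < d) ('C(d.-1, k))%:R * psi theta d.+1 k.+1 * (muC k - muD k)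
  + \sum_(k < d) \sum_(l < d) ('C(d.-1, k))%:R * ('C(d.-1, l))%:R *
      (- psi theta (2 * d).+1 (k + l + 2) * (sCC k l - sCD k l)
       + psi theta (2 * d).+1 (k + l + 1) * (sDD k l - sCD k l)).

(* Stag hunt: a_k = -c for k < d-1, a_{d-1} = b - c, b_k = 0. *)
Definition stag_muC {R : realFieldType} (d : nat) (mub muc : R) (k : nat) : R :=
  if (k < d.-1)%N then - muc else mub - muc.

Definition stag_sCC {R : realFieldType} (d : nat) (sb2 sc2 sbc : R)
  (k l : nat) : R :=
  if (k < d.-1)%N && (l < d.-1)%N then sc2
  else if (k == d.-1) && (l == d.-1) then sc2 - 2 * sbc + sb2
  else sc2 - sbc.

Definition F_stag {R : realFieldType} (d : nat) (theta mub muc sb2 sc2 sbc : R)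
  : R :=
  Fgen d theta (stag_muC d mub muc) (fun _ => 0)
    (stag_sCC d sb2 sc2 sbc) (fun _ _ => 0) (fun _ _ => 0).

(* Main.v *)
Require Import Defs.
From mathcomp Require Import all_boot all_order all_algebra.
From mathcomp Require Import ring lra.
Import Order.TTheory GRing.Theory Num.Theory.
Local Open Scope ring_scope.

Lemma psi_gt0 (R : realFieldType) (theta : R) n k : 0 < theta -> 0 < psi theta n k.
Proof.
move=> ht; rewrite /psi; apply: divr_gt0; first apply: mulr_gt0;
  apply: prodr_gt0 => i _.
- by apply: ltr_wpDr; rewrite ?ler0n.
- by apply: ltr_wpDr; rewrite ?ler0n.
- by apply: ltr_wpDr; rewrite ?ler0n // mulr_gt0.
Qed.

Lemma sum_lt0 (R : realFieldType) n (i0 : 'I_n) (t : 'I_n -> R) :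
  (forall i, t i <= 0) -> t i0 < 0 -> \sum_(i < n) t i < 0.
Proof.
move=> h h0; rewrite (bigD1 i0) //=.
have : \sum_(i < n | i != i0) t i <= 0 by apply: sumr_le0 => i _.
move=> h1; lra.
Qed.

Lemma sum2_lt0 (R : realFieldType) n (i0 : 'I_n) (t : 'I_n -> 'I_n -> R) :
  (forall i j, t i j <= 0) -> t i0 i0 < 0 -> \sum_(i < n) \sum_(j < n) t i j < 0.
Proof.
move=> h h0; apply: (@sum_lt0 _ _ i0 (fun i => \sum_(j < n) t i j)).
  by move=> i; apply: sumr_le0 => j _.
by apply: (@sum_lt0 _ _ i0 (t i0)).
Qed.

Lemma Fgen_diff (R : realFieldType) d (theta : R) muC muD s1 s2 :
  Fgen d theta muC muD s1 (fun _ _ => 0) (fun _ _ => 0)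
  - Fgen d theta muC muD s2 (fun _ _ => 0) (fun _ _ => 0)
  = \sum_(k < d) \sum_(l < d) - (('C(d.-1, k))%:R * ('C(d.-1, l))%:R *
       psi theta (2 * d).+1 (k + l + 2) * (s1 k l - s2 k l)).
Proof.
rewrite /Fgen opprD addrACA subrr add0r -sumrB; apply: eq_bigr => k _.
rewrite -sumrB; apply: eq_bigr => l _; ring.
Qed.

Theorem mainTheorem4 (R : realFieldType) (d : nat) (theta : R) :
  (2 <= d)%N -> 0 < theta ->
  (forall mub muc sb2 sbc x y : R, x < y ->
     F_stag d theta mub muc sb2 y sbc < F_stag d theta mub muc sb2 x sbc) /\
  (forall mub muc sc2 sbc x y : R, x < y ->
     F_stag d theta mub muc y sc2 sbc < F_stag d theta mub muc x sc2 sbc) /\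
  (forall mub muc sb2 sc2 x y : R, x < y ->
     F_stag d theta mub muc sb2 sc2 x < F_stag d theta mub muc sb2 sc2 y).
Proof.
case: d => [|d] // hd ht.
have P (k l : 'I_d.+1) : 0 < ('C(d, k))%:R * ('C(d, l))%:R * psi theta (2 * d.+1).+1 (k + l + 2) :> R.
  by rewrite mulr_gt0 ?psi_gt0 // mulr_gt0 // ltr0n bin_gt0 -ltnS.
split; [|split].
- move=> mub muc sb2 sbc x y hxy; rewrite -subr_lt0 /F_stag Fgen_diff.
  have hyx : 0 < y - x by rewrite subr_gt0.
  have E k l : stag_sCC d.+1 sb2 y sbc k l - stag_sCC d.+1 sb2 x sbc k l = y - x.
    by rewrite /stag_sCC; case: ifP => _; [|case: ifP => _]; ring.
  eapply (@sum2_lt0 _ _ ord_max); [move=> k l|]; rewrite E.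
    by rewrite oppr_le0 ltW // mulr_gt0.
  by rewrite oppr_lt0 mulr_gt0.
- move=> mub muc sc2 sbc x y hxy; rewrite -subr_lt0 /F_stag Fgen_diff.
  have hyx : 0 < y - x by rewrite subr_gt0.
  have E (k l : 'I_d.+1) : stag_sCC d.+1 y sc2 sbc k l - stag_sCC d.+1 x sc2 sbc k l
     = if (k == d :> nat) && (l == d :> nat) then y - x else 0.
    rewrite /stag_sCC /=; case: ifP => [/andP[h1 h2]|h].
      by rewrite (ltn_eqF h1) /=; ring.
    by case: ifP => _; ring.
  eapply (@sum2_lt0 _ _ ord_max); [move=> k l|]; rewrite E.
    case: ifP => _; last by rewrite mulr0 oppr0.
    by rewrite oppr_le0 ltW // mulr_gt0.
  rewrite /= eqxx /=.
  rewrite oppr_lt0 mulr_gt0 //; exact: (P ord_max ord_max).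
- move=> mub muc sb2 sc2 x y hxy; rewrite -subr_lt0 /F_stag Fgen_diff.
  have hyx : 0 < y - x by rewrite subr_gt0.
  have E (k l : 'I_d.+1) : stag_sCC d.+1 sb2 sc2 x k l - stag_sCC d.+1 sb2 sc2 y k l
     = (y - x) * (if (k < d)%N && (l < d)%N then 0
                  else if (k == d :> nat) && (l == d :> nat) then 2 else 1).
    by rewrite /stag_sCC /=; case: ifP => _; [|case: ifP => _]; ring.
  eapply (@sum2_lt0 _ _ ord_max); [move=> k l|]; rewrite E.
    rewrite oppr_le0; apply: mulr_ge0; first exact: ltW. apply: mulr_ge0; first exact: ltW.
    by case: ifP => _ //; case: ifP => _.
  rewrite /= ltnn eqxx /= oppr_lt0; apply: mulr_gt0; first exact: (P ord_max ord_max).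
  by rewrite mulr_gt0.
Qed.
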